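(* Let $\mu$ be any weight in the weight lattice of $\Delta(\mathfrak k,\mathfrak t_f)$, let $\beta$ be the highest weight of the $\mathfrak k$-representation $\mathfrak p$, and let $0\le j\le s-1$. Then $$2\langle\rho_c,\ \{\mu-\rho_n^{(j)}\}-\{\mu-\beta-\rho_n^{(j)}\}\rangle\ \ge\ -2\langle\rho_c,\beta\rangle.$$
   Context: Setting: $G(\mathbb R)$ a real form of a complex connected simple group, Cartan involution $\theta$, $\mathfrak g=\mathfrak k\oplus\mathfrak p$ complexified Cartan decomposition, $\mathfrak h_f=\mathfrak t_f\oplus\mathfrak a_f$ the fundamental $\theta$-stable Cartan subalgebra ($\mathfrak t_{f,0}$ maximal abelian in $\mathfrak k_0$); assume $\mathfrak k$ has no center and $\mathfrak p$ is an irreducible $\mathfrak k$-module with highest weight $\beta$. $\langle\cdot,\cdot\rangle$ is induced by a fixed nondegenerate invariant form. Positive systems $\Delta^+(\mathfrak g,\mathfrak t_f)=\Delta^+(\mathfrak k,\mathfrak t_f)\cup\Delta^+(\mathfrak p,\mathfrak t_f)$ are fixed; $\rho_c$ is half the sum of $\Delta^+(\mathfrak k,\mathfrak t_f)$. With $C$, $C_{\mathfrak g}$ the dominant chambers of $\Delta^+(\mathfrak k,\mathfrak t_f)$, $\Delta^+(\mathfrak g,\mathfrak t_f)$, $W(\mathfrak g,\mathfrak t_f)^1=\{w: w(C_{\mathfrak g})\subseteq C\}=\{w^{(0)},\dots,w^{(s-1)}\}$ and $\rho_n^{(j)}$ is half the sum of $w^{(j)}\Delta^+(\mathfrak p,\mathfrak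 t_f)$. For a weight $\nu$, $\{\nu\}$ denotes the unique $\Delta^+(\mathfrak k,\mathfrak t_f)$-dominant element of $W(\mathfrak k,\mathfrak t_f)\nu$. *)

(* Defs.v *)
(* Abstract root-system model of the data
   (t_f^*, Delta(k,t_f), Delta(p,t_f), W(k,t_f), W(g,t_f), ...). *)
From HB Require Import structures.
From mathcomp Require Import all_boot all_order all_algebra.
Set Implicit Arguments. Unset Strict Implicit. Unset Printing Implicit Defensive.
Import Order.TTheory GRing.Theory Num.Theory.
Local Open Scope ring_scope.

Section RootData.
Variables (R : realFieldType) (n : nat).
Local Notation V := 'rV[R]_n.

Definition dot (u v : V) : R := \sum_(i < n) u ord0 i * v ord0 i.

Definition refl (a v : V) : V := v - ((2 * dot v a) / dot a a) *: a.

Inductive inW (S : seq V) : (V -> V) -> Prop :=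
| inW_id : inW S id
| inW_step (a : V) (f : V -> V) : a \in S -> inW S f -> inW S (refl a \o f).

Definition integral_wrt (S : seq V) (x : V) : Prop :=
  forall a, a \in S -> exists z : int, 2 * dot x a / dot a a = z%:~R.

(* a (possibly non-reduced) crystallographic root system (roots listed
   with multiplicities allowed) *)
Definition root_system (S : seq V) : Prop :=
  [/\ 0 \notin S,
      forall a b, a \in S -> b \in S -> refl a b \in S &
      forall b, b \in S -> integral_wrt S b].

Definition reduced_root_system (S : seq V) : Prop :=
  [/\ uniq S, root_system S &
      forall a (c : R), a \in S -> c *: a \in S -> c = 1 \/ c = -1].

(* the roots span the space (k has no center, t_f Cartan of k) *)
Definition spans (S : seq V) : Prop :=
  forall v : V, (forall a, a \in S -> dot v a = 0) -> v = 0.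

Definition regular (S : seq V) (h : V) : Prop := forall a, a \in S -> dot a h != 0.
Definition pos_sys (S : seq V) (h : V) : seq V := [seq a <- S | 0 < dot a h].

Definition half_sum (S : seq V) : V := 2^-1 *: \sum_(a <- S) a.

Definition dominant (P : seq V) (x : V) : Prop := forall a, a \in P -> 0 <= dot x a.
Definition in_chamber (P : seq V) (x : V) : Prop := forall a, a \in P -> 0 < dot x a.

Definition nat_span_le (P : seq V) (y x : V) : Prop :=
  exists c : V -> nat, x - y = \sum_(a <- P) (c a)%:R *: a.

(* beta is the highest weight of the module whose nonzero weights (with
   multiplicity) are Wt, relative to the positive system P *)
Definition highest_weight (P Wt : seq V) (beta : V) : Prop :=
  beta \in Wt /\ forall g, g \in Wt -> nat_span_le P g beta.

(* d = {nu}: d is the dominant (for P) element of the W(S)-orbit of nu *)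
Definition dom_rep (S P : seq V) (nu d : V) : Prop :=
  (exists u, inW S u /\ d = u nu) /\ dominant P d.

End RootData.

(* Main.v *)
Require Import Defs.
From HB Require Import structures.
From mathcomp Require Import all_boot all_order all_algebra.
From mathcomp Require Import ring lra.
Set Implicit Arguments. Unset Strict Implicit. Unset Printing Implicit Defensive.
Import Order.TTheory GRing.Theory Num.Theory.
Local Open Scope ring_scope.

Lemma dotC (R : realFieldType) n (u v : 'rV[R]_n) : dot u v = dot v u.
Proof. by rewrite /dot; apply: eq_bigr => i _; rewrite mulrC. Qed.

Lemma dotDr (R : realFieldType) n (u v w : 'rV[R]_n) : dot u (v + w) = dot u v + dot u w.
Proof. by rewrite /dot -big_split; apply: eq_bigr => i _; rewrite !mxE mulrDr. Qed.

Lemma dotZr (R : realFieldType) n (u v : 'rV[R]_n) k : dot u (k *: v) = k * dot u v.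
Proof. by rewrite /dot mulr_sumr; apply: eq_bigr => i _; rewrite !mxE mulrCA. Qed.

Lemma dotNr (R : realFieldType) n (u v : 'rV[R]_n) : dot u (- v) = - dot u v.
Proof. by rewrite -scaleN1r dotZr mulN1r. Qed.

Lemma dotBr (R : realFieldType) n (u v w : 'rV[R]_n) : dot u (v - w) = dot u v - dot u w.
Proof. by rewrite dotDr dotNr. Qed.

Lemma dot0r (R : realFieldType) n (u : 'rV[R]_n) : dot u 0 = 0.
Proof. by rewrite /dot big1 // => i _; rewrite mxE mulr0. Qed.

Lemma dot_sumr (R : realFieldType) n (u : 'rV[R]_n) (s : seq 'rV[R]_n) (F : 'rV[R]_n -> 'rV[R]_n) :
  dot u (\sum_(a <- s) F a) = \sum_(a <- s) dot u (F a).
Proof.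
elim: s => [|a s IH]; first by rewrite !big_nil dot0r.
by rewrite !big_cons dotDr IH.
Qed.

Lemma dot_suml (R : realFieldType) n (u : 'rV[R]_n) (s : seq 'rV[R]_n) (F : 'rV[R]_n -> 'rV[R]_n) :
  dot (\sum_(a <- s) F a) u = \sum_(a <- s) dot (F a) u.
Proof. by rewrite dotC dot_sumr; apply: eq_bigr => a _; rewrite dotC. Qed.

Lemma dot_ge0 (R : realFieldType) n (u : 'rV[R]_n) : 0 <= dot u u.
Proof. by rewrite /dot sumr_ge0 // => i _; rewrite -expr2 sqr_ge0. Qed.

Lemma dot_gt0 (R : realFieldType) n (u : 'rV[R]_n) : u != 0 -> 0 < dot u u.
Proof.
move=> u0; rewrite lt_def dot_ge0 andbT; apply: contra u0 => /eqP H.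
have H2 := psumr_eq0P (fun i (_ : true) => (sqr_ge0 (u ord0 i))) H.
apply/eqP/rowP => i; rewrite mxE.
by apply/eqP; rewrite -sqrf_eq0; apply/eqP; apply: H2.
Qed.

Lemma dotDl (R : realFieldType) n (u v w : 'rV[R]_n) : dot (v + w) u = dot v u + dot w u.
Proof. by rewrite !(dotC _ u) dotDr. Qed.
Lemma dotZl (R : realFieldType) n (u v : 'rV[R]_n) k : dot (k *: v) u = k * dot v u.
Proof. by rewrite !(dotC _ u) dotZr. Qed.
Lemma dotNl (R : realFieldType) n (u v : 'rV[R]_n) : dot (- v) u = - dot v u.
Proof. by rewrite !(dotC _ u) dotNr. Qed.
Lemma dotBl (R : realFieldType) n (u v w : 'rV[R]_n) : dot (v - w) u = dot v u - dot w u.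
Proof. by rewrite !(dotC _ u) dotBr. Qed.

Lemma refl_iso (R : realFieldType) n (a x y : 'rV[R]_n) : dot a a != 0 ->
  dot (refl a x) (refl a y) = dot x y.
Proof.
move=> a0; rewrite /refl !(dotBl, dotBr, dotZl, dotZr).
rewrite (dotC a y); by field.
Qed.

Lemma refl_invol (R : realFieldType) n (a x : 'rV[R]_n) : dot a a != 0 ->
  refl a (refl a x) = x.
Proof.
move=> a0; rewrite {1}/refl dotBl dotZl.
set c := 2 * dot x a / dot a a.
have -> : 2 * (dot x a - c * dot a a) / dot a a = - c.
  by rewrite /c; by field.
by rewrite /refl -/c scaleNr opprK subrK.
Qed.

Lemma refl_self (R : realFieldType) n (a : 'rV[R]_n) : dot a a != 0 -> refl a a = - a.
Proof.
move=> a0; rewrite /refl.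
have -> : 2 * dot a a / dot a a = 2 by by field.
by rewrite scaler_nat mulr2n opprD addNKr.
Qed.

Lemma refl_B (R : realFieldType) n (a x y : 'rV[R]_n) :
  refl a (x - y) = refl a x - refl a y.
Proof.
rewrite /refl dotBl mulrBr mulrBl scalerBl.
rewrite opprB; set p := _ *: a; set q := _ *: a.
by apply/rowP => i; rewrite !mxE; ring.
Qed.


Lemma inW_comp (R : realFieldType) n (S : seq 'rV[R]_n) f g :
  inW S f -> inW S g -> inW S (f \o g).
Proof.
move=> Hf Hg; elim: Hf => [|a f' aS _ IH]; first exact: Hg.
exact: (inW_step aS IH).
Qed.

Lemma inW_inv (R : realFieldType) n (S : seq 'rV[R]_n) u :
  (forall a, a \in S -> dot a a != 0) ->
  inW S u -> exists u', inW S u' /\ forall x, u' (u x) = x.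
Proof.
move=> HS; elim=> [|a f aS _ [f' [Hf' Hinv]]]; first by exists id; split => //; constructor.
exists (f' \o refl a); split.
  apply: inW_comp => //; exact: (inW_step aS (inW_id S)).
by move=> x /=; rewrite refl_invol ?HS // Hinv.
Qed.

Lemma inW_B (R : realFieldType) n (S : seq 'rV[R]_n) u :
  inW S u -> forall x y, u (x - y) = u x - u y.
Proof.
elim=> [|a f aS _ IH] x y //=.
by rewrite IH refl_B.
Qed.

Lemma inW_N (R : realFieldType) n (S : seq 'rV[R]_n) u :
  inW S u -> forall x, u (- x) = - u x.
Proof.
move=> Hu x; have H0 : u 0 = 0 by have := inW_B Hu 0 0; rewrite !subrr.
by rewrite -sub0r (inW_B Hu) H0 sub0r.
Qed.

Lemma inW_iso (R : realFieldType) n (S : seq 'rV[R]_n) u :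
  (forall a, a \in S -> dot a a != 0) ->
  inW S u -> forall x y, dot (u x) (u y) = dot x y.
Proof.
move=> HS; elim=> [|a f aS _ IH] x y //=.
by rewrite refl_iso ?HS // IH.
Qed.

Lemma inW_perm (R : realFieldType) n (S L : seq 'rV[R]_n) u :
  (forall a, a \in S -> perm_eq (map (refl a) L) L) ->
  inW S u -> perm_eq (map u L) L.
Proof.
move=> HL; elim=> [|a f aS _ IH]; first by rewrite map_id.
rewrite map_comp; apply: perm_trans (HL a aS).
exact: perm_map.
Qed.

Lemma sum_split (R : realFieldType) n (Dk : seq 'rV[R]_n) h (F : 'rV[R]_n -> R) :
  uniq Dk -> (forall a, a \in Dk -> - a \in Dk) -> regular Dk h ->
  \sum_(a <- Dk) F a = \sum_(a <- pos_sys Dk h) (F a + F (- a)).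
Proof.
move=> uD nD rD.
rewrite big_split /= (bigID (fun a => 0 < dot a h)) /= -big_filter.
congr (_ + _).
have -> : \sum_(a <- pos_sys Dk h) F (- a) = \sum_(a <- map -%R (pos_sys Dk h)) F a.
  by rewrite big_map.
rewrite -big_filter; apply: perm_big; apply: uniq_perm.
- exact: filter_uniq.
- by rewrite (map_inj_uniq oppr_inj) filter_uniq.
move=> x; rewrite -{2}(opprK x) (mem_map oppr_inj) !mem_filter /=.
rewrite dotNl oppr_gt0.
case xD: (x \in Dk); last first.
  rewrite !andbF; apply/esym/negP => /andP [_ /nD]; by rewrite opprK xD.
rewrite (nD _ xD) !andbT -leNgt le_eqVlt.
by rewrite (negbTE (rD _ xD)).
Qed.

Lemma trick (R : realFieldType) n (Dk : seq 'rV[R]_n) h d (v : 'rV[R]_n -> 'rV[R]_n) :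
  uniq Dk -> (forall a, a \in Dk -> - a \in Dk) -> regular Dk h ->
  dominant (pos_sys Dk h) d ->
  perm_eq (map v Dk) Dk -> (forall a, v (- a) = - v a) ->
  \sum_(b <- pos_sys Dk h) dot (v b) d <= \sum_(b <- pos_sys Dk h) dot b d.
Proof.
move=> uD nD rD dd pv vN.
apply: (le_trans (y := \sum_(b <- pos_sys Dk h) `|dot (v b) d|)).
  by apply: ler_sum => b _; apply: ler_norm.
have E1 := sum_split (fun a => `|dot (v a) d|) uD nD rD.
have E2 := sum_split (fun a => `|dot a d|) uD nD rD.
have E3 : \sum_(a <- Dk) `|dot (v a) d| = \sum_(a <- Dk) `|dot a d|.
  by rewrite -(big_map v xpredT (fun a => `|dot a d|)); apply: perm_big.
rewrite /= in E1 E2.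
have E4 : \sum_(b <- pos_sys Dk h) (`|dot (v b) d| + `|dot (v (- b)) d|)
   = \sum_(b <- pos_sys Dk h) `|dot (v b) d| + \sum_(b <- pos_sys Dk h) `|dot (v b) d|.
  by rewrite -big_split; apply: eq_bigr => b _; rewrite vN dotNl normrN.
have E5 : \sum_(b <- pos_sys Dk h) (`|dot b d| + `|dot (- b) d|)
   = \sum_(b <- pos_sys Dk h) dot b d + \sum_(b <- pos_sys Dk h) dot b d.
  rewrite -big_split [LHS]big_seq [RHS]big_seq; apply: eq_bigr => b bP.
  rewrite dotNl normrN ger0_norm //; rewrite dotC; exact: (dd b bP).
rewrite E4 in E1; rewrite E5 in E2.
lra.
Qed.

Lemma refl_perm (R : realFieldType) n (Dk : seq 'rV[R]_n) a :
  uniq Dk -> dot a a != 0 -> (forall b, b \in Dk -> refl a b \in Dk) ->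
  perm_eq (map (refl a) Dk) Dk.
Proof.
move=> uD a0 cl; apply: uniq_perm => //.
  rewrite map_inj_uniq // => x y E.
  by rewrite -(refl_invol x a0) E refl_invol.
move=> x; apply/idP/idP.
  by case/mapP => y yD ->; apply: cl.
by move=> xD; apply/mapP; exists (refl a x); [apply: cl | rewrite refl_invol].
Qed.

Lemma rho_pos (R : realFieldType) n (Dk : seq 'rV[R]_n) h a :
  uniq Dk -> (forall a, a \in Dk -> - a \in Dk) -> regular Dk h ->
  (forall b, b \in Dk -> dot b b != 0) ->
  (forall a b, a \in Dk -> b \in Dk -> refl a b \in Dk) ->
  a \in pos_sys Dk h -> 0 <= dot (half_sum (pos_sys Dk h)) a.
Proof.
move=> uD nD rD D0 cl aP.
have aD : a \in Dk by move: aP; rewrite mem_filter => /andP[].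
have aH : 0 < dot a h by move: aP; rewrite mem_filter => /andP[].
have a0 := D0 a aD.
have Ha : 0 < dot a a by rewrite lt_def a0 dot_ge0.
have := trick uD nD rD (d := h) (v := refl a) _ (refl_perm uD a0 (cl a ^~ aD))
  (inW_N (inW_step aD (inW_id Dk))).
have dh : dominant (pos_sys Dk h) h.
  by move=> b; rewrite mem_filter => /andP[H _]; rewrite dotC ltW.
move=> /(_ dh).
have -> : \sum_(b <- pos_sys Dk h) dot (refl a b) h =
   \sum_(b <- pos_sys Dk h) dot b h -
   (2 / dot a a * dot a h) * \sum_(b <- pos_sys Dk h) dot b a.
  rewrite mulr_sumr -sumrB; apply: eq_bigr => b _.
  rewrite /refl dotBl dotZl; congr (_ - _).
  ring.
rewrite gerBl => H.
rewrite /half_sum dotZl dot_suml mulr_ge0 ?invr_ge0 //.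
have Hc : 0 < 2 / dot a a * dot a h.
  by rewrite mulr_gt0 // mulr_gt0 // invr_gt0.
by rewrite -(pmulr_rge0 _ Hc).
Qed.

Lemma refl_N (R : realFieldType) n (a x : 'rV[R]_n) : refl a (- x) = - refl a x.
Proof. exact: (inW_N (inW_step (S := [:: a]) (mem_head _ _) (inW_id _))). Qed.

Lemma orbit_le (R : realFieldType) n (Dk : seq 'rV[R]_n) h d x u1 u2 :
  uniq Dk -> (forall a, a \in Dk -> - a \in Dk) -> regular Dk h ->
  (forall b, b \in Dk -> dot b b != 0) ->
  (forall a b, a \in Dk -> b \in Dk -> refl a b \in Dk) ->
  dominant (pos_sys Dk h) d -> inW Dk u1 -> d = u1 x -> inW Dk u2 ->
  dot (half_sum (pos_sys Dk h)) (u2 x) <= dot (half_sum (pos_sys Dk h)) d.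
Proof.
move=> uD nD rD D0 cl dd Hu1 dE Hu2.
have [u1' [Hu1' Hinv1]] := inW_inv D0 Hu1.
have Hg := inW_comp Hu2 Hu1'.
have [g' [Hg' Hginv]] := inW_inv D0 Hg.
have -> : u2 x = (u2 \o u1') d by rewrite /= dE Hinv1.
rewrite /half_sum !dotZl !dot_suml; apply: ler_wpM2l; first by rewrite invr_ge0.
have E : forall b, dot b ((u2 \o u1') d) = dot (g' b) d.
  by move=> b; rewrite -(inW_iso D0 Hg' b) Hginv.
under eq_bigr do rewrite E.
apply: trick => //; last exact: inW_N Hg'.
apply: (inW_perm (S := Dk)) => // a aD.
exact: refl_perm (D0 a aD) (cl a ^~ aD).
Qed.

Unset Implicit Arguments.

Theorem mainTheorem8 (R : realFieldType) (n : nat)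
    (Dk Dp : seq 'rV[R]_n) (h beta mu d1 d2 : 'rV[R]_n)
    (w : 'rV[R]_n -> 'rV[R]_n) :
  reduced_root_system Dk ->
  spans Dk ->
  root_system (Dk ++ Dp) ->
  0 \notin Dp ->
  (forall a, a \in Dk -> perm_eq (map (refl a) Dp) Dp) ->
  regular (Dk ++ Dp) h ->
  highest_weight (pos_sys Dk h) Dp beta ->
  integral_wrt Dk mu ->
  inW (Dk ++ Dp) w ->
  (forall x, in_chamber (pos_sys (Dk ++ Dp) h) x ->
             in_chamber (pos_sys Dk h) (w x)) ->
  dom_rep Dk (pos_sys Dk h) (mu - half_sum (map w (pos_sys Dp h))) d1 ->
  dom_rep Dk (pos_sys Dk h) (mu - beta - half_sum (map w (pos_sys Dp h))) d2 ->
  2 * dot (half_sum (pos_sys Dk h)) (d1 - d2)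
    >= - (2 * dot (half_sum (pos_sys Dk h)) beta).
Proof.
move=> [uD [zD cl _] _] _ [_ clG _] zP Hperm rG [bP hw] _ _ _
  [[u1 [Hu1 E1]] dom1] [[u2 [Hu2 E2]] _].
set nu := mu - half_sum _ in E1 E2.
set rho := half_sum _.
have D0 : forall b, b \in Dk -> dot b b != 0.
  move=> b bD; rewrite gt_eqF // dot_gt0 //; apply: contraNneq zD => <-; done.
have nD : forall a, a \in Dk -> - a \in Dk.
  by move=> a aD; rewrite -refl_self ?D0 //; apply: cl.
have rD : regular Dk h by move=> a aD; apply: rG; rewrite mem_cat aD.
have Hle := orbit_le uD nD rD D0 cl dom1 Hu1 E1 Hu2.
have E2' : d2 = u2 nu - u2 beta.
  by rewrite E2 -(inW_B Hu2) /nu; congr u2; rewrite addrAC.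
have gP : u2 beta \in Dp.
  have := inW_perm Hperm Hu2; move/perm_mem => <-.
  exact: map_f.
have ngP : - u2 beta \in Dp.
  set g := u2 beta in gP *.
  have g0 : dot g g != 0.
    rewrite gt_eqF // dot_gt0 //; apply: contraNneq zP => <-; done.
  have : refl g g \in Dk ++ Dp by apply: clG; rewrite mem_cat gP orbT.
  rewrite refl_self // mem_cat => /orP [ngD|] //.
  have := Hperm _ ngD; move/perm_mem => <-.
  apply/mapP; exists g => //.
  by rewrite -[X in refl _ X](opprK g) refl_N refl_self ?opprK // dotNl dotNr opprK.
have [c Hc] := hw _ ngP.
have Hpos : 0 <= dot rho (beta - - u2 beta).
  rewrite Hc dot_sumr big_seq sumr_ge0 // => a aP.
  rewrite dotZr mulr_ge0 //.
  exact: rho_pos.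
rewrite E2' !dotBr in Hle Hpos *.
rewrite dotNr opprK in Hpos.
lra.
Qed.
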